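(* Let $G$ be a finitely generated group with arbitrarily large finite quotients, and let $n$ be a positive integer. Then $G$ has a finite generating set $A$ such that the depth of $G$ with respect to $A$ is at least $n$.
   Context: A group $G$ has arbitrarily large finite quotients if for every integer $m$ there is a surjective homomorphism from $G$ onto a finite group of order at least $m$. For a finite generating set $A$ of $G$, let $d_A$ denote the word metric on $G$ induced by $A$ (equivalently, the path metric in the Cayley graph of $G$ with respect to $A$). The (dead-end) depth of an element $g\in G$ with respect to $A$ is the $d_A$-distance from $g$ to the complement of the closed ball $\{x\in G : d_A(1,x)\le d_A(1,g)\}$, i.e. the distance from $g$ to the nearest element $x$ with $d_A(1,x)>d_A(1,g)$. The depth of $G$ with respect to $A$ is the (possibly infinite) supremum of the depths of all elements of $G$ with respect to $A$. *)

(* Defs.v *)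
(* An abstract (possibly infinite) group is given by an
   explicit carrier type with operations and group axioms. *)
From Stdlib Require List.
From mathcomp Require Import all_boot all_fingroup.
Set Implicit Arguments. Unset Strict Implicit. Unset Printing Implicit Defensive.

Definition is_group (T : Type) (mul : T -> T -> T) (one : T) (inv : T -> T) : Prop :=
  (forall x y z, mul x (mul y z) = mul (mul x y) z) /\
  (forall x, mul one x = x) /\ (forall x, mul x one = x) /\
  (forall x, mul (inv x) x = one) /\ (forall x, mul x (inv x) = one).

Section Words.
Variables (T : Type) (mul : T -> T -> T) (one : T) (inv : T -> T).

Definition letter (A : seq T) (a : T) : Prop := List.In a A \/ List.In (inv a) A.

Definition represents (A : seq T) (k : nat) (g : T) : Prop :=
  exists l : seq T, size l = k /\ (forall a, List.In a l -> letter A a) /\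
                    foldr mul one l = g.

Definition generates (A : seq T) : Prop := forall g, exists k, represents A k g.

Definition finitely_generated : Prop := exists A : seq T, generates A.

Definition wlen (A : seq T) (g : T) (k : nat) : Prop :=
  represents A k g /\ forall m, represents A m g -> k <= m.

Definition wdist (A : seq T) (x y : T) (d : nat) : Prop := wlen A (mul (inv x) y) d.

(* the depth of g w.r.t. A is at least n: every x with d_A(1,x) > d_A(1,g)
   satisfies d_A(g,x) >= n (depth = infimum of these distances, +oo if none) *)
Definition elt_depth_ge (A : seq T) (g : T) (n : nat) : Prop :=
  forall x kg kx d, wlen A g kg -> wlen A x kx -> kg < kx -> wdist A g x d -> n <= d.

(* the depth of G w.r.t. A (a supremum of natural numbers / +oo) is at least n *)
Definition depth_ge (A : seq T) (n : nat) : Prop := exists g, elt_depth_ge A g n.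

Definition arb_large_finite_quotients : Prop :=
  forall m : nat, exists (gT : finGroupType) (f : T -> gT),
    (forall x y, f (mul x y) = (f x * f y)%g) /\
    (forall z : gT, exists x, f x = z) /\
    m <= #|[set: gT]|.
End Words.

(* Main.v *)
Require Import Defs.
From mathcomp Require Import all_boot all_fingroup.
From Stdlib Require Import Classical.
From mathcomp Require Import zify.
Set Implicit Arguments. Unset Strict Implicit. Unset Printing Implicit Defensive.

Section Main.
Variables (T : Type) (mul : T -> T -> T) (one : T) (inv : T -> T).
Hypothesis hG : is_group mul one inv.

Local Notation prod w := (foldr mul one w).

Lemma mulA x y z : mul x (mul y z) = mul (mul x y) z. Proof. by case: hG. Qed.
Lemma mul1x x : mul one x = x. Proof. by case: hG => _ []. Qed.
Lemma mulx1 x : mul x one = x. Proof. by case: hG => _ [] _ []. Qed.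
Lemma mulVx x : mul (inv x) x = one. Proof. by case: hG => _ [] _ [] _ []. Qed.
Lemma mulxV x : mul x (inv x) = one. Proof. by case: hG => _ [] _ [] _ []. Qed.

Lemma inv_uniq x z : mul x z = one -> z = inv x.
Proof. move=> h. by rewrite -[z]mul1x -(mulVx x) -mulA h mulx1. Qed.
Lemma invK x : inv (inv x) = x. Proof. symmetry; apply: inv_uniq; exact: mulVx. Qed.
Lemma inv1 : inv one = one. Proof. symmetry; apply: inv_uniq; exact: mul1x. Qed.
Lemma invM x y : inv (mul x y) = mul (inv y) (inv x).
Proof. symmetry; apply: inv_uniq. by rewrite mulA -(mulA x y) mulxV mulx1 mulxV. Qed.

Lemma prod_cat s1 s2 : prod (s1 ++ s2) = mul (prod s1) (prod s2).
Proof. elim: s1 => [|a s IH] /=; first by rewrite mul1x. by rewrite IH mulA. Qed.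

Lemma In_cat (a : T) s1 s2 : List.In a (s1 ++ s2) <-> List.In a s1 \/ List.In a s2.
Proof. elim: s1 => [|b s IH] /=; first tauto. move: IH; clear; tauto. Qed.

Fixpoint invw (w : seq T) := if w is a :: w' then invw w' ++ [:: inv a] else [::].

Lemma prod_invw w : prod (invw w) = inv (prod w).
Proof.
elim: w => [|a w IH] /=; first by rewrite inv1.
by rewrite prod_cat IH /= mulx1 invM.
Qed.
Lemma size_invw w : size (invw w) = size w.
Proof. elim: w => [|a w IH] //=. by rewrite size_cat /= IH addn1. Qed.
Lemma In_invw a w : List.In a (invw w) -> List.In (inv a) w.
Proof.
elim: w => [|b w IH] //=. move/In_cat => [/IH|]; first tauto.
move=> [<-|[]]; rewrite invK; by left.
Qed.

Lemma prod_nseq k : prod (nseq k one) = one.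
Proof. elim: k => [|k IH] //=. by rewrite IH mul1x. Qed.
Lemma In_nseq (a : T) k : List.In a (nseq k one) -> a = one.
Proof. elim: k => [|k IH] //= [<-|/IH] //. Qed.

Lemma In_take (a : T) k w : List.In a (take k w) -> List.In a w.
Proof. move=> h. rewrite -(cat_take_drop k w). apply/In_cat. by left. Qed.
Lemma In_drop (a : T) k w : List.In a (drop k w) -> List.In a w.
Proof. move=> h. rewrite -(cat_take_drop k w). apply/In_cat. by right. Qed.

Lemma In_mapP (U : Type) (g : T -> U) a s : List.In a s -> List.In (g a) (map g s).
Proof. elim: s => [|b s IH] //= [->|/IH]; tauto. Qed.
Lemma In_mapE (U : Type) (g : T -> U) y s : List.In y (map g s) -> exists a, List.In a s /\ y = g a.
Proof.
elim: s => [|b s IH] //= [<-|/IH [a [h ->]]]; first by exists b; tauto.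
by exists a; tauto.
Qed.
Lemma In_mem (U : eqType) (g : T -> U) a s : List.In a s -> g a \in map g s.
Proof. elim: s => [|b s IH] //= [->|/IH]; rewrite inE ?eqxx //. by move=> ->; rewrite orbT. Qed.
Lemma mem_In (U : eqType) (g : T -> U) y s : y \in map g s -> exists a, List.In a s /\ y = g a.
Proof.
elim: s => [|b s IH] //=. rewrite inE => /orP [/eqP ->|/IH [a [h ->]]].
  by exists b; tauto.
by exists a; tauto.
Qed.

Variable L : seq T.
Hypothesis L1 : List.In one L.
Hypothesis Linv : forall l, List.In l L -> List.In (inv l) L.

Definition inL (w : seq T) := forall a, List.In a w -> List.In a L.
Definition Lw k x := exists w, size w <= k /\ inL w /\ prod w = x.

Lemma Lw_mul i j x y : Lw i x -> Lw j y -> Lw (i + j) (mul x y).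
Proof.
move=> [w1 [s1 [i1 <-]]] [w2 [s2 [i2 <-]]]. exists (w1 ++ w2); split.
  by rewrite size_cat leq_add.
split; last by rewrite prod_cat.
by move=> a /In_cat [/i1|/i2].
Qed.
Lemma Lw_inv k x : Lw k x -> Lw k (inv x).
Proof.
move=> [w [s [i <-]]]. exists (invw w); split; first by rewrite size_invw.
split; last by rewrite prod_invw.
by move=> a /In_invw /i /Linv; rewrite invK.
Qed.
Lemma Lw_mono i j x : i <= j -> Lw i x -> Lw j x.
Proof. move=> h [w [s [i' e]]]. exists w; split=> //. exact: leq_trans h. Qed.
Lemma Lw_one k : Lw k one.
Proof. by exists [::]; split=> //; split=> // a []. Qed.
Lemma Lw_exact k x : Lw k x -> exists w, size w = k /\ inL w /\ prod w = x.
Proof.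
move=> [w [s [i <-]]]. exists (w ++ nseq (k - size w) one); split.
  by rewrite size_cat size_nseq subnKC.
split; last by rewrite prod_cat prod_nseq mulx1.
by move=> a /In_cat [/i|/In_nseq ->].
Qed.
Lemma Lw_split k1 k2 x : Lw (k1 + k2) x ->
  exists x1 x2, Lw k1 x1 /\ Lw k2 x2 /\ x = mul x1 x2.
Proof.
move=> [w [s [i <-]]]. exists (prod (take k1 w)), (prod (drop k1 w)); split.
  exists (take k1 w); split; last split=> //.
    by rewrite size_take; case: ifP => // /negbT; rewrite -leqNgt.
  by move=> a /In_take /i.
split; last by rewrite -prod_cat cat_take_drop.
exists (drop k1 w); split; last split=> //.
  rewrite size_drop. lia.
by move=> a /In_drop /i.
Qed.

Variables (gT : finGroupType) (f : T -> gT).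
Hypothesis fM : forall x y, f (mul x y) = (f x * f y)%g.

Lemma f1 : f one = 1%g.
Proof.
have h : (f one * f one = f one * 1)%g by rewrite mulg1 -fM mul1x.
by move/mulgI: h.
Qed.
Lemma fV x : f (inv x) = ((f x)^-1)%g.
Proof.
have h : (f x * f (inv x) = f x * (f x)^-1)%g by rewrite -fM mulxV f1 mulgV.
by move/mulgI: h.
Qed.

Definition qlen k x := exists v, size v <= k /\ inL v /\ f (prod v) = f x.

Lemma qlen_mono i j x : i <= j -> qlen i x -> qlen j x.
Proof. move=> h [w [s [i' e]]]. exists w; split=> //. exact: leq_trans h. Qed.
Lemma qlen_f k x y : f x = f y -> qlen k x -> qlen k y.
Proof. move=> e [w [s [i' e']]]. exists w; do 2 split=> //. by rewrite e' e. Qed.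
Lemma Lw_qlen k x : Lw k x -> qlen k x.
Proof. move=> [w [s [i e]]]. exists w; do 2 split=> //. by rewrite e. Qed.
Lemma qlen_exact k x : qlen k x -> exists v, size v = k /\ inL v /\ f (prod v) = f x.
Proof.
move=> [w [s [i e]]]. have [v [sv [iv ev]]] := @Lw_exact k (prod w) (ex_intro _ w (conj s (conj i erefl))).
by exists v; rewrite ev.
Qed.

Fixpoint words k : list (seq T) :=
  if k is k'.+1 then List.flat_map (fun l => List.map (cons l) (words k')) L
  else [:: [::]].

Lemma words_complete k w : size w = k -> inL w -> List.In w (words k).
Proof.
elim: k w => [|k IH] [|a w] //=; first by left.
move=> [Hs] Hin. apply/List.in_flat_map. exists a; split; first by apply: Hin; left.
apply/List.in_map_iff; exists w; split=> //. apply: IH => // b Hb; apply: Hin; by right.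
Qed.
Lemma words_sound k w : List.In w (words k) -> Lw k (prod w).
Proof.
elim: k w => [|k IH] w /=; first by move=> [<-|[]]; apply: Lw_one.
move/List.in_flat_map => [l [Hl /List.in_map_iff [w' [<- Hw']]]] /=.
have h1 : Lw 1 l.
  exists [:: l]; split=> //; split; last by rewrite /= mulx1.
  by move=> a [<-|[]].
exact: (Lw_mul h1 (IH _ Hw')).
Qed.

Definition Aset R := List.filter (fun c => f c \in map f L) (List.map (fun w => prod w) (words R)).

Lemma inA R c : Lw R c -> (exists l, List.In l L /\ f c = f l) -> List.In c (Aset R).
Proof.
move=> /Lw_exact [w [sw [iw <-]]] [l [Hl e]]. apply/List.filter_In; split.
  apply/List.in_map_iff. exists w; split=> //. exact: words_complete.
by rewrite e; apply: In_mem.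
Qed.

Lemma Aletter R a : letter inv (Aset R) a -> Lw R a /\ exists l, List.In l L /\ f a = f l.
Proof.
have H c : List.In c (Aset R) -> Lw R c /\ exists l, List.In l L /\ f c = f l.
  move/List.filter_In => [/List.in_map_iff [w [<- Hw]] Hm]; split.
    exact: words_sound.
  by move/mem_In: Hm.
move=> [/H //|/H [h1 [l [Hl e]]]]; split.
  by rewrite -(invK a); apply: Lw_inv.
exists (inv l); split; first exact: Linv.
by rewrite fV -e fV invgK.
Qed.

Lemma rep_qlen R k g : represents mul one inv (Aset R) k g -> qlen k g.
Proof.
move=> [l [<- [Hl <-]]]. elim: l Hl => [|a l IH] Hl /=.
  by exists [::]; split=> //; split=> // b [].
have [_ [l0 [Hl0 e0]]] := Aletter (Hl a (or_introl erefl)).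
have [v [sv [iv ev]]] := IH (fun b hb => Hl b (or_intror hb)).
exists (l0 :: v); split=> //; split.
  by move=> b [<-|/iv].
by rewrite /= !fM ev e0.
Qed.

Lemma rep_Lw R k g : represents mul one inv (Aset R) k g -> Lw (k * R) g.
Proof.
move=> [l [<- [Hl <-]]]. elim: l Hl => [|a l IH] Hl /=; first exact: Lw_one.
have [h1 _] := Aletter (Hl a (or_introl erefl)).
rewrite mulSn. apply: Lw_mul => //. apply: IH => b hb; apply: Hl; by right.
Qed.

Lemma one_A R : List.In one (Aset R).
Proof. apply: inA; first exact: Lw_one. by exists one. Qed.

Lemma rep_cons R k c g : List.In c (Aset R) -> represents mul one inv (Aset R) k g ->
  represents mul one inv (Aset R) k.+1 (mul c g).
Proof.
move=> hc [l [sl [Hl <-]]]. exists (c :: l); split; first by rewrite /= sl.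
split=> //. move=> a [<-|/Hl] //. by left.
Qed.
Lemma rep_pad R k j g : k <= j -> represents mul one inv (Aset R) k g ->
  represents mul one inv (Aset R) j g.
Proof.
move=> h [l [sl [Hl <-]]]. exists (l ++ nseq (j - k) one); split.
  by rewrite size_cat size_nseq sl subnKC.
split; last by rewrite prod_cat prod_nseq mulx1.
move=> a /In_cat [/Hl //|/In_nseq ->]. left; exact: one_A.
Qed.

Lemma KL D B (HD : forall x, qlen D x) k : forall y e v,
  Lw (k.+1 * B) y -> Lw D e -> size v = k.+1 -> inL v ->
  f (mul (inv e) y) = f (prod v) ->
  represents mul one inv (Aset (D + B + D)) k.+1 (mul (inv e) y).
Proof.
elim: k => [|k IH] y e v Hy He Hv Hin Hf.
  case: v Hv Hin Hf => [|l [|]] // _ Hin Hf.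
  have c_A : List.In (mul (inv e) y) (Aset (D + B + D)).
    apply: inA.
      apply: (Lw_mono (leq_addr D _)). apply: Lw_mul; first exact: Lw_inv.
      by rewrite mul1n in Hy.
    exists l; split; first by apply: Hin; left.
    by rewrite Hf /= mulx1.
  rewrite -[mul (inv e) y]mulx1. apply: rep_cons => //.
  by exists [::]; split=> //; split=> // a [].
case: v Hv Hin Hf => [|l v] // [Hv] Hin Hf.
rewrite mulSn in Hy. have [y1 [y2 [H1 [H2 Ey]]]] := Lw_split Hy.
rewrite Ey in Hf *.
set z := mul (inv (mul (inv e) y1)) l.
have [u [su [iu fu]]] := HD z.
have He' : Lw D (prod u) by exists u.
set e' := prod u in He' fu.
have -> : mul (inv e) (mul y1 y2) = mul (mul (mul (inv e) y1) e') (mul (inv e') y2).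
  by rewrite -!mulA (mulA e') mulxV mul1x.
apply: rep_cons.
  apply: inA.
    apply: Lw_mul => //. apply: Lw_mul => //. exact: Lw_inv.
  exists l; split; first by apply: Hin; left.
  by rewrite fM fu /z !(fM, fV) mulgA mulgV mul1g.
apply: (IH y2 e' v) => //.
  by move=> a ha; apply: Hin; right.
move: Hf. rewrite !(fM, fV) => Hf.
rewrite fu /z !(fM, fV) invMg invgK -!mulgA Hf.
by rewrite mulKg.
Qed.

Fixpoint balls k : seq gT :=
  if k is k'.+1 then [seq (a * b)%g | a <- map f L, b <- balls k'] else [:: 1%g].

Lemma balls_in v : inL v -> f (prod v) \in balls (size v).
Proof.
elim: v => [|a v IH] Hv /=; first by rewrite f1 inE.
rewrite fM. apply: allpairs_f; first by apply: In_mem; apply: Hv; left.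
by apply: IH => b hb; apply: Hv; right.
Qed.

Lemma size_balls k : size (balls k) = size L ^ k.
Proof. elim: k => [|k IH] //=. by rewrite size_allpairs size_map IH expnS. Qed.

Lemma count_bound k : (forall z : gT, exists x, f x = z) -> (forall x, qlen k x) ->
  #|[set: gT]| <= size L ^ k.
Proof.
move=> surj Hq. rewrite -size_balls. apply: leq_trans (card_size _).
apply: subset_leq_card. apply/subsetP => z _.
have [x <-] := surj z. have [v [sv [iv <-]]] := qlen_exact (Hq x).
by rewrite -sv; apply: balls_in.
Qed.

Lemma uniform_bound (s : seq gT) :
  (forall z, z \in s -> exists x, f x = z /\ exists N, Lw N x) ->
  exists M, forall z, z \in s -> forall x, f x = z -> qlen M x.
Proof.
elim: s => [|z0 s IH] H; first by exists 0.
have [M HM] := IH (fun z hz => H z (mem_behead (s := z0 :: s) hz)).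
have [x0 [fx0 [N HN]]] := H z0 (mem_head _ _).
exists (maxn M N) => z; rewrite inE => /orP [/eqP -> | hz] x fx.
  apply: (qlen_f (x := x0)); first by rewrite fx fx0.
  apply: (qlen_mono (leq_maxr M N)). exact: Lw_qlen.
apply: (qlen_mono (leq_maxl M N)). exact: HM hz x fx.
Qed.

End Main.

Lemma minP (P : nat -> Prop) : forall M, P M -> exists D, P D /\ forall k, k < D -> ~ P k.
Proof.
suff H : forall M1 N, N <= M1 -> P N -> exists D, P D /\ forall k, k < D -> ~ P k.
  by move=> M2; exact: (H M2 M2 (leqnn M2)).
elim=> [|M0 IH] N hN PN.
  exists N; split=> // k hk. lia.
case: (classic (exists k, k <= M0 /\ P k)) => [[k [hk Pk]]|nex].
  exact: (IH k hk Pk).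
exists N; split=> // k hk Pk. apply: nex; exists k; split=> //. lia.
Qed.

Lemma ar n D d : 0 < n -> n < D -> d < n -> D + d * (D + 2 * n * D + D) <= D * (2 * n * D).
Proof. move=> h1 h2 h3. nia. Qed.

Theorem proposition1 (T : Type) (mul : T -> T -> T) (one : T) (inv : T -> T)
  (hG : is_group mul one inv)
  (hfg : finitely_generated mul one inv)
  (hq : arb_large_finite_quotients mul)
  (n : nat) (hn : 0 < n) :
  exists A : seq T, generates mul one inv A /\ depth_ge mul one inv A n.
Proof.
have [S HS] := hfg.
set L := one :: S ++ map inv S.
have L1 : List.In one L by left.
have Linv : forall l, List.In l L -> List.In (inv l) L.
  move=> l [<-|/In_cat [h|h]]; first by left; rewrite (inv1 hG).
    right; apply/In_cat; right; exact: In_mapP.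
  have [b [hb ->]] := In_mapE h. right; apply/In_cat; left. by rewrite (invK hG).
have HLw : forall g, exists N, Lw mul one L N g.
  move=> g. have [N [l [sl [Hl <-]]]] := HS g. exists N. exists l; split; first by rewrite sl.
  split=> // a /Hl [h|h]; right; apply/In_cat; [by left | right].
  rewrite -(invK hG a). exact: In_mapP.
have [gT [f [fM [surj card]]]] := hq (size L ^ n).+1.
have notall : ~ (forall x, qlen mul one L f n x).
  move=> H. have := count_bound hG L1 fM surj H. move: card. lia.
have [M HM] : exists M, forall x, qlen mul one L f M x.
  have hyp : forall z, z \in enum gT -> exists x, f x = z /\ exists N, Lw mul one L N x.
    move=> z _. have [x fx] := surj z. have [N0 HN0] := HLw x. exists x; split; [exact: fx | exists N0; exact: HN0].
  have [M HM] := @uniform_bound T mul one L gT f (enum gT) hyp.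
  exists M => x. apply: (HM (f x)) => //. by rewrite mem_enum.
have [D [HD Dmin]] := @minP (fun k => forall x, qlen mul one L f k x) M HM.
have nD : n < D.
  rewrite ltnNge; apply/negP => h; apply: notall => x; exact: (qlen_mono h (HD x)).
have [g0 Hg0] : exists g0, ~ qlen mul one L f D.-1 g0.
  apply: not_all_ex_not. apply: Dmin. lia.
have [v [sv [iv fv]]] := HD g0.
set g := foldr mul one v.
have gnq : ~ qlen mul one L f D.-1 g.
  move=> h; apply: Hg0; exact: (qlen_f fv h).
have gLw : Lw mul one L D g by exists v.
have DS : D = D.-1.+1 by lia.
set B := 2 * n * D.
exists (Aset mul one L f (D + B + D)). split.
  move=> x. have [N HN] := HLw x.
  have [w [sw [iw fw]]] := qlen_exact hG L1 (qlen_mono (leq_maxr N D) (HD x)).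
  have k0 : maxn N D = (maxn N D).-1.+1 by lia.
  have := @KL T mul one inv hG L L1 Linv gT f fM D B HD (maxn N D).-1 x one w.
  rewrite (inv1 hG) (mul1x hG) -k0 => H. exists (maxn N D). apply: H.
  { apply: (Lw_mono _ HN). rewrite /B. nia. }
  { exact: Lw_one. }
  { exact: sw. }
  { exact: iw. }
  { by rewrite fw. }
exists g => x kg kx d Hg Hx Hlt Hd.
rewrite leqNgt; apply/negP => hd.
have Hy := rep_Lw hG Linv fM (proj1 Hd).
have Ex : x = mul g (mul (inv g) x) by rewrite (mulA hG) (mulxV hG) (mul1x hG).
have Hx' : Lw mul one L (D * B) x.
  rewrite Ex. have h := Lw_mul hG gLw Hy. apply: (Lw_mono _ h). rewrite /B. exact: ar.
have [w [sw [iw fw]]] := qlen_exact hG L1 (HD x).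
have := @KL T mul one inv hG L L1 Linv gT f fM D B HD D.-1 x one w.
rewrite (inv1 hG) (mul1x hG) -DS => H.
have Hrep := H Hx' (Lw_one _ _ _ _) sw iw (esym fw).
have kxD := proj2 Hx D Hrep.
have kgD : D <= kg.
  rewrite leqNgt; apply/negP => h. apply: gnq.
  apply: (qlen_mono _ (rep_qlen hG Linv fM (proj1 Hg))). lia.
lia.
Qed.
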